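(* Let $k\ge2$ and $n\ge3$. Every monomial occurring in $\mathcal{F}_{n,k}(x)$ has exponent at least $r_{n,k}$, and the coefficient of $x^{r_{n,k}}$ equals $\binom{q_{n,k}+r_{n,k}}{q_{n,k}}$. In other words, the lowest-degree term of $\mathcal{F}_{n,k}(x)$ is $\binom{q_{n,k}+r_{n,k}}{r_{n,k}}x^{r_{n,k}}$.
   Context: For $k\ge2$, the polynomials $\mathcal{F}_{n,k}(x)\in\mathbb{Z}[x]$ ($n\in\mathbb{Z}$) are defined by $\mathcal{F}_{1,k}=1$, $\mathcal{F}_{n,k}=0$ for $n=0,-1,\dots,-(k-2)$, and $\mathcal{F}_{n,k}(x)=\sum_{j=1}^{k}x^{k-j}\mathcal{F}_{n-j,k}(x)$ for all $n\in\mathbb{Z}$. This recurrence is used upwards for $n\ge2$, and downwards for $n\le-(k-1)$ as $\mathcal{F}_{n,k}=\mathcal{F}_{n+k,k}-\sum_{j=1}^{k-1}x^j\mathcal{F}_{n+j,k}$. For $n>0$, set $q_{n,k}=\lfloor (n-2)/k\rfloor$ and let $r_{n,k}\in\{0,\dots,k-1\}$ be the residue of $(k-1)(n-1)$ modulo $k$. Then $n-1=k(q_{n,k}+1)-r_{n,k}$. *)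

(* Defs.v *)
From mathcomp Require Import all_boot all_order all_algebra.
Set Implicit Arguments. Unset Strict Implicit. Unset Printing Implicit Defensive.
Import GRing.Theory.
Local Open Scope ring_scope.

(* F_0 = 0, F_1 = 1, and for n >= 2
     F_n = \sum_{j=1}^{k} x^{k-j} F_{n-j},
   where every term with n - j <= 0 is 0 (these indices lie in
   {-(k-2),...,0}, where F is 0 by definition).  Implemented with fuel
   (fuel = n suffices since indices strictly decrease). *)
Fixpoint Faux (k : nat) (fuel : nat) (n : nat) : {poly int} :=
  match fuel with
  | 0%N => 0
  | fuel'.+1 =>
    match n with
    | 0%N => 0
    | 1%N => 1
    | _ => \sum_(1 <= j < k.+1 | (j < n)%N) 'X^(k - j) * Faux k fuel' (n - j)
    end
  end.

Definition Fpoly (n k : nat) : {poly int} := Faux k n n.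

Definition qnk (n k : nat) : nat := ((n - 2) %/ k)%N.
Definition rnk (n k : nat) : nat := (((k - 1) * (n - 1)) %% k)%N.

(* Main.v *)
Require Import Defs.
From mathcomp Require Import all_boot all_order all_algebra.
From mathcomp Require Import zify.
Import GRing.Theory.
Local Open Scope ring_scope.

Lemma FauxS k f n : Faux k f.+1 n.+2 =
  \sum_(1 <= j < k.+1 | (j < n.+2)%N) 'X^(k - j) * Faux k f (n.+2 - j).
Proof. by []. Qed.

Lemma Faux_fuel k f g n : (n <= f)%N -> (n <= g)%N -> Faux k f n = Faux k g n.
Proof.
elim: f g n => [|f IH] g n hf hg.
  have -> : n = 0%N by lia. by case: g hg.
case: g hg => [|g] hg; first by have -> : n = 0%N by lia.
case: n hf hg => [|[|n]] hf hg //.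
rewrite [LHS]FauxS [RHS]FauxS big_nat_cond [RHS]big_nat_cond; apply: eq_bigr => j /andP[/andP[h1 h2] h3].
congr (_ * _); apply: IH; lia.
Qed.

Lemma Fpoly_rec n k : (2 <= n)%N ->
  Fpoly n k = \sum_(1 <= j < k.+1 | (j < n)%N) 'X^(k - j) * Fpoly (n - j) k.
Proof.
case: n => [|[|n]] // _; rewrite /Fpoly [LHS]FauxS.
rewrite big_nat_cond [RHS]big_nat_cond; apply: eq_bigr => j /andP[/andP[h1 h2] h3].
congr (_ * _); apply: Faux_fuel; lia.
Qed.

Lemma Fpoly1 k : Fpoly 1 k = 1. Proof. by []. Qed.

Definition rr k m := (((k - 1) * m) %% k)%N.
Definition qq k m := ((m - 1) %/ k)%N.

Lemma rr_form k q s : (0 < k)%N -> (s < k)%N ->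
  rr k (k*q+s+1) = (k-1-s)%N /\ qq k (k*q+s+1) = q.
Proof.
move=> hk hs; split.
  rewrite /rr.
  have -> : ((k - 1) * (k * q + s + 1) = k * ((k-1)*q + s) + (k-1-s))%N.
    move: (subnK hs) => e.
    set u := (k - s.+1)%N in e *.
    have -> : (k - 1 - s = u)%N by lia.
    rewrite -e (_ : (u + s.+1 - 1 = u + s)%N); last by lia.
    nia.
  by rewrite mulnC modnMDl modn_small //; lia.
rewrite /qq (_ : (k * q + s + 1 - 1 = k * q + s)%N); last by lia.
by rewrite mulnC divnMDl // divn_small // addn0.
Qed.

Lemma rr_shift k q s j : (1 < k)%N -> (s < k)%N -> (1 <= j <= k)%N ->
  (j <= k*q+s+1)%N ->
  ((j <= s)%N -> rr k (k*q+s+1 - j) = (k-1-s+j)%N) /\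
  ((s < j)%N -> rr k (k*q+s+1-j) = (j-s-1)%N /\ qq k (k*q+s+1-j) = (q-1)%N).
Proof.
move=> hk hs hj hjm; split=> hjs.
  have -> : (k*q+s+1 - j = k*q + (s-j) + 1)%N by lia.
  have [-> _] := @rr_form k q (s - j) ltac:(lia) ltac:(lia); lia.
case: q hjm => [|q] hjm.
  have -> : (k*0+s+1 - j = 0)%N by lia.
  rewrite /rr /qq muln0 mod0n div0n; lia.
have -> : (k*q.+1+s+1 - j = k*q + (k+s-j) + 1)%N by lia.
have [-> ->] := @rr_form k q (k+s-j) ltac:(lia) ltac:(lia); lia.
Qed.

Lemma sum_zero (a b : nat) (F : nat -> nat) :
  (forall j, (a <= j < b)%N -> F j = 0%N) -> (\sum_(a <= j < b) F j)%N = 0%N.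
Proof.
move=> h; rewrite big_nat_cond big1 // => j /andP[hj _]; exact: h.
Qed.

Lemma hockey a s K : (s <= K)%N ->
  (\sum_(s.+1 <= j < K.+1) 'C(a + (j - s.+1), a))%N = 'C(a + (K - s), a.+1).
Proof.
elim: K => [|K IH] hs.
  have -> : s = 0%N by lia.
  by rewrite big_geq // addn0 bin_small.
case: (ltngtP s K.+1) => h; last first.
- by rewrite h big_geq // subnn addn0 bin_small.
- lia.
rewrite big_nat_recr /=; last lia.
rewrite IH; last lia.
have -> : (a + (K.+1 - s) = (a + (K - s)).+1)%N by lia.
have -> : (K.+1 - s.+1 = K - s)%N by lia.
by rewrite binS.
Qed.

Lemma main_aux k : (1 < k)%N -> forall m i, (i <= rr k m)%N ->
  (Fpoly m.+1 k)`_i = ((if i == rr k m then 'C(qq k m + rr k m, qq k m) else 0)%N)%:R.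
Proof.
move=> hk; elim/ltn_ind => m IH i hi.
case: m IH hi => [|m] IH hi.
  have e : rr k 0 = 0%N by rewrite /rr muln0 mod0n.
  rewrite e in hi *; have -> : i = 0%N by lia.
  by rewrite Fpoly1 coef1 /qq div0n.
have hdm := divn_eq m k. set q := (m %/ k)%N in hdm. set s := (m %% k)%N in hdm.
have hs : (s < k)%N by rewrite ltn_pmod //; lia.
have hM : (m.+1 = k*q+s+1)%N by lia.
have [rM qM] := @rr_form k q s ltac:(lia) hs.
have step : forall j, (1 <= j < k.+1)%N -> (j < m.+2)%N ->
  ('X^(k-j) * Fpoly (m.+2 - j) k)`_i =
  ((if (i < k-j)%N then 0 else if (i - (k-j) == rr k (m.+1 - j)) then
     'C(qq k (m.+1-j) + rr k (m.+1-j), qq k (m.+1-j)) else 0)%N)%:R.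
  move=> j hj hjm; rewrite coefXnM.
  case: ifP => h; first by [].
  rewrite (_ : (m.+2 - j = (m.+1 - j).+1)%N); last by lia.
  apply: IH; first lia.
  have [sh1 sh2] := @rr_shift k q s j hk hs ltac:(lia) ltac:(lia).
  rewrite hM in hi *; rewrite rM in hi.
  case: (leqP j s) => hjs; first by rewrite sh1 //; lia.
  by have [-> _] := sh2 hjs; lia.
rewrite Fpoly_rec // coef_sum.
transitivity ((\sum_(1 <= j < k.+1 | (j < m.+2)%N)
   (if (i < k-j)%N then 0 else if (i - (k-j) == rr k (m.+1 - j)) then
     'C(qq k (m.+1-j) + rr k (m.+1-j), qq k (m.+1-j)) else 0))%N%:R : int).
  rewrite natr_sum [LHS]big_nat_cond [RHS]big_nat_cond.
  by apply: eq_bigr => j /andP[/andP[h1 h2] h3]; apply: step => //; lia.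
congr (_%:R).
rewrite hM rM qM in hi *.
rewrite big_mkcond /=.
case: eqP => hie.
- subst i.
  rewrite (big_cat_nat (n:=s.+1)) /=; [|lia|lia].
  rewrite sum_zero ?add0n; last first.
    move=> j hj; case: ifP => // _; case: ifP => // h; exfalso; lia.
  clear step IH; clearbody q s; case: q hdm hM rM qM => [|q] hdm hM rM qM.
  + rewrite big_ltn; last lia.
    have [sh1 sh2] := @rr_shift k 0 s s.+1 hk hs ltac:(lia) ltac:(lia).
    have [-> ->] := sh2 (ltnSn s).
    rewrite sum_zero; last first.
      move=> j hj; case: ifP => // h; exfalso; lia.
    have -> : (s.+1 < (k * 0 + s + 1).+1)%N by lia.
    have -> : (k - 1 - s < k - s.+1)%N = false by lia.
    rewrite (_ : (k - 1 - s - (k - s.+1) = s.+1 - s - 1)%N); last by lia.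
    by rewrite eqxx /= !bin0.
  + rewrite (@eq_big_nat _ _ _ s.+1 k.+1 _ (fun j => 'C(q + (j - s.+1), q))); last first.
      move=> j hj.
      have [sh1 sh2] := @rr_shift k q.+1 s j hk hs ltac:(lia) ltac:(lia).
      have [-> ->] := sh2 ltac:(lia).
      have -> : (j < (k * q.+1 + s + 1).+1)%N by lia.
      have -> : (k - 1 - s < k - j)%N = false by lia.
      have -> : (k - 1 - s - (k - j) = j - s - 1)%N by lia.
      rewrite eqxx; congr 'C(_, _); lia.
    rewrite hockey; last lia.
    congr 'C(_, _); lia.
- rewrite sum_zero // => j hj.
  case: ifP => // hjm; case: ifP => // h1; case: eqP => // e; exfalso.
  have [sh1 sh2] := @rr_shift k q s j hk hs ltac:(lia) ltac:(lia).
  case: (leqP j s) => hjs.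
    by move: e; rewrite sh1 //; lia.
  by have [e2 _] := sh2 hjs; move: e; rewrite e2; lia.
Qed.

Theorem mainTheorem3 (k n : nat) (hk : (2 <= k)%N) (hn : (3 <= n)%N) :
  (forall i : nat, (i < rnk n k)%N -> (Fpoly n k)`_i = 0) /\
  (Fpoly n k)`_(rnk n k) = ('C(qnk n k + rnk n k, qnk n k))%:R.
Proof.
case: n hn => [|n] hn //.
have er : rnk n.+1 k = rr k n by rewrite /rnk /rr subSS subn0.
have eq : qnk n.+1 k = qq k n by rewrite /qnk /qq subSS.
rewrite er eq; split.
  move=> i hi; rewrite main_aux //; last lia.
  by rewrite (_ : (i == rr k n) = false) //; apply/eqP; lia.
by rewrite main_aux // eqxx.
Qed.
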